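(* Let $m\ge1$, let $p_1,\dots,p_m\ge 0$ with $p_1+\cdots+p_m=1$, let $S$ be a finite nonempty word on $[m]$ all of whose letters have positive probability, and let $S'$ be the reversal of $S$. For a die showing face $i$ with probability $p_i$ rolled independently, let $E(W)$ denote the expected number of rolls until the word $W$ first appears as a block of consecutive outcomes. Then $E(S')=E(S)$. *)

(* Defs.v *)
From HB Require Import structures.
From mathcomp Require Import all_boot all_order all_algebra.
From mathcomp Require Import all_classical all_reals all_analysis.
Set Implicit Arguments. Unset Strict Implicit. Unset Printing Implicit Defensive.
Import Order.TTheory GRing.Theory Num.Theory.
Local Open Scope ring_scope.

(* Probability that the first n rolls of a die with face probabilities p
   (i.i.d. rolls) do NOT contain the word W as a block of consecutive
   outcomes, i.e. P(T_W > n) where T_W is the waiting time for W. *)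
Definition avoid_prob (R : realType) (m : nat) (p : 'I_m -> R)
  (W : seq 'I_m) (n : nat) : R :=
  \sum_(u : n.-tuple 'I_m | ~~ infix W u) \prod_(x <- u) p x.

(* Expected waiting time E(W) = E[T_W] in the extended reals, via the
   tail-sum formula E[T] = \sum_{n >= 0} P(T > n) for a random variable
   with values in {0,1,2,...} U {+oo} (it is +oo if P(T = +oo) > 0). *)
Definition expected_wait (R : realType) (m : nat) (p : 'I_m -> R)
  (W : seq 'I_m) : \bar R :=
  (\sum_(0 <= n <oo) (avoid_prob p W n)%:E)%E.

(* Main.v *)
Require Import Defs.
From HB Require Import structures.
From mathcomp Require Import all_boot all_order all_algebra.
From mathcomp Require Import all_classical all_reals all_analysis.
Import Order.TTheory GRing.Theory Num.Theory.
Local Open Scope ring_scope.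

Lemma avoid_rev (R : realType) (m : nat) (p : 'I_m -> R) (S : seq 'I_m) n :
  avoid_prob p (rev S) n = avoid_prob p S n.
Proof.
rewrite /avoid_prob.
have inj : injective (@rev_tuple n 'I_m).
  by move=> u v /(congr1 val) /= /(congr1 rev); rewrite !revK => /val_inj.
rewrite (reindex_inj inj) /=.
apply: eq_big => u; first by rewrite infix_rev.
by move=> _; rewrite big_rev.
Qed.

Theorem corollary4p4 (R : realType) (m : nat) (p : 'I_m -> R) (S : seq 'I_m)
  (hm : (1 <= m)%N)
  (hp0 : forall i, 0 <= p i)
  (hp1 : \sum_(i < m) p i = 1)
  (hS : (0 < size S)%N)
  (hSpos : forall i, i \in S -> 0 < p i) :
  expected_wait p (rev S) = expected_wait p S.
Proof.
have E : avoid_prob p (rev S) = avoid_prob p S.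
  by apply/funext => n; apply: avoid_rev.
by rewrite /expected_wait E.
Qed.
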